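(* Let $(X, A, Y(0), Y(1))$ be a random vector with $X \in \mathbb{R}^d$ covariates, $A \in \{0,1\}$ a binary treatment and $Y(0), Y(1) \in \mathbb{R}$ potential outcomes. Let $f:\mathbb{R}^d \to [0,1]$ be a weight function and let $V \sim \mathrm{Unif}(0,1)$ be drawn independently of $(X, A, Y(0), Y(1))$. Define the pair of flip interventions \[ D_f(0) = A\,\mathbf{1}\{V > f(X)\}, \qquad D_f(1) = A + (1-A)\,\mathbf{1}\{V \le f(X)\}, \] and the interventional flip effect \[ \psi_f = \frac{\mathbb{E}\big[ Y\{D_f(1)\} - Y\{D_f(0)\}\big]}{\mathbb{E}\{D_f(1) - D_f(0)\}}. \] Then \[ \psi_f = \mathbb{E}\left[ \frac{\mathbb{E}\{Y(1) - Y(0) \mid X\}\, f(X)}{\mathbb{E}\{f(X)\}} \right]. \]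
   Context: For a (possibly random) treatment decision $D \in \{0,1\}$, $Y(D)$ denotes the potential outcome under decision $D$, i.e. $Y(D) = D\,Y(1) + (1-D)\,Y(0)$. The observed outcome is $Y = Y(A)$ (consistency). The right-hand side is a weighted average treatment effect with weight $f$; the ratio $\psi_f$ is assumed well defined (i.e. $\mathbb{E}\{f(X)\}>0$ and the relevant expectations exist). *)

(* Defs.v *)
From HB Require Import structures.
From mathcomp Require Import all_boot all_order all_algebra.
From mathcomp Require Import all_classical all_reals all_analysis.
Set Implicit Arguments. Unset Strict Implicit. Unset Printing Implicit Defensive.
Import Order.TTheory GRing.Theory Num.Theory.
Import numFieldNormedType.Exports.
Local Open Scope classical_set_scope.
Local Open Scope ring_scope.

Definition Rvec (R : realType) (d : nat) :=
  g_sigma_algebraType (@open 'rV[R]_d).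

Definition ind (R : realType) (b : bool) : R := if b then 1 else 0.

Definition YD (R : realType) (D y0 y1 : R) : R := D * y1 + (1 - D) * y0.

Definition Df0 (R : realType) (a v fx : R) : R := a * @ind R (fx < v).
Definition Df1 (R : realType) (a v fx : R) : R := a + (1 - a) * @ind R (v <= fx).

Definition is_unif01 d (T : measurableType d) (R : realType)
  (P : probability T R) (V : T -> R) :=
  forall t : R, 0 <= t <= 1 -> P [set w | V w <= t] = t%:E.

(* V is independent of the random vector (X, A, Y0, Y1): the joint law
   factorizes on measurable rectangles (which generate the product
   sigma-algebra and form a pi-system). *)
Definition indep_of d dx (T : measurableType d) (X_ : measurableType dx)
  (R : realType) (P : probability T R)
  (V : T -> R) (X : T -> X_) (A Y0 Y1 : T -> R) :=
  forall (Bx : set X_) (Ba B0 B1 Bv : set R),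
    measurable Bx -> measurable Ba -> measurable B0 -> measurable B1 ->
    measurable Bv ->
    P (X @^-1` Bx `&` A @^-1` Ba `&` Y0 @^-1` B0 `&` Y1 @^-1` B1
         `&` V @^-1` Bv)
    = (P (X @^-1` Bx `&` A @^-1` Ba `&` Y0 @^-1` B0 `&` Y1 @^-1` B1)
       * P (V @^-1` Bv))%E.

(* g is (a version of) the conditional expectation E{Z | X}, viewed as a
   measurable function of X: E[g(X) 1{X in B}] = E[Z 1{X in B}] for all
   measurable B. *)
Definition is_cond_exp d dx (T : measurableType d) (X_ : measurableType dx)
  (R : realType) (P : probability T R) (Z : T -> R) (X : T -> X_)
  (g : X_ -> R) :=
  [/\ measurable_fun setT g,
      P.-integrable setT (EFin \o (g \o X)) &
      forall B : set X_, measurable B ->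
        (\int[P]_(w in X @^-1` B) (g (X w))%:E
         = \int[P]_(w in X @^-1` B) (Z w)%:E)%E].

(* Main.v *)
Require Import Defs.
From HB Require Import structures.
From mathcomp Require Import all_boot all_order all_algebra.
From mathcomp Require Import all_classical all_reals all_analysis.
From mathcomp Require Import ring lra measurable_realfun.
Import Order.TTheory GRing.Theory Num.Theory.
Import numFieldNormedType.Exports.
Local Open Scope classical_set_scope.
Local Open Scope ring_scope.
Set Implicit Arguments. Unset Strict Implicit.

Lemma measurable_ind (R : realType) d0 (Ty : measurableType d0) (g1 g2 : Ty -> R) :
  measurable_fun setT g1 -> measurable_fun setT g2 ->
  measurable_fun setT (fun z => @ind R (g1 z <= g2 z)).
Proof.
move=> m1 m2; rewrite /ind; apply: measurable_fun_ifT => //; exact: measurable_fun_ler.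
Qed.

Lemma ind_le (R : realType) (b : bool) (a : R) : `|@ind R b * a| <= `|a|.
Proof. by case: b; rewrite /ind ?mul1r ?mul0r ?normr0. Qed.

Section S.
Context (R : realType) (dT : measure_display) (T : measurableType dT) (P : probability T R) (d : nat)
 (X : T -> Rvec R d) (A Y0 Y1 V : T -> R).
Hypotheses (mX : measurable_fun setT X) (mA : measurable_fun setT A)
  (mY0 : measurable_fun setT Y0) (mY1 : measurable_fun setT Y1) (mV : measurable_fun setT V).

Definition C : set (set T) := [set G | exists Bx Ba B0 B1,
  [/\ measurable Bx, measurable Ba, measurable B0, measurable B1 &
   G = X @^-1` Bx `&` A @^-1` Ba `&` Y0 @^-1` B0 `&` Y1 @^-1` B1]].

Local Notation T' := (g_sigma_algebraType C).

Lemma C_meas : C `<=` measurable.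
Proof.
move=> _ [Bx [Ba [B0 [B1 [mBx mBa mB0 mB1 ->]]]]].
apply: measurableI; [apply: measurableI; [apply: measurableI|]|].
- by rewrite -[X in measurable X]setTI; apply: mX.
- by rewrite -[X in measurable X]setTI; apply: mA.
- by rewrite -[X in measurable X]setTI; apply: mY0.
- by rewrite -[X in measurable X]setTI; apply: mY1.
Qed.

Lemma mid : measurable_fun setT (fun w : T => (w : T')).
Proof.
move=> _ G mG; rewrite setTI preimage_id.
exact: (smallest_sub (@sigma_algebra_measurable _ T) C_meas mG).
Qed.

Lemma mX' : measurable_fun setT (X : T' -> Rvec R d).
Proof.
move=> _ B mB; rewrite setTI; apply: sub_sigma_algebra.
exists B, setT, setT, setT; split => //.
by rewrite !preimage_setT !setIT.
Qed.

Lemma mY0' : measurable_fun setT (Y0 : T' -> R).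
Proof.
move=> _ B mB; rewrite setTI; apply: sub_sigma_algebra.
exists setT, setT, B, setT; split => //.
by rewrite !preimage_setT setIT !setTI.
Qed.

Lemma mY1' : measurable_fun setT (Y1 : T' -> R).
Proof.
move=> _ B mB; rewrite setTI; apply: sub_sigma_algebra.
exists setT, setT, setT, B; split => //.
by rewrite !preimage_setT !setTI.
Qed.

Definition Pm : {mfun T >-> T'} := MeasurableFun.Pack (MeasurableFun.Class (isMeasurableFun.Build _ _ _ _ _ mid)).
Definition Vm : {mfun T >-> R} := MeasurableFun.Pack (MeasurableFun.Class (isMeasurableFun.Build _ _ _ _ _ mV)).
Lemma mPhi : measurable_fun setT (fun w : T => ((w : T'), V w)).
Proof. exact: measurable_fun_pair mid mV. Qed.
Definition Phim : {mfun T >-> (T' * R)%type} := MeasurableFun.Pack (MeasurableFun.Class (isMeasurableFun.Build _ _ _ _ _ mPhi)).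

Definition P' := distribution P Pm.
Definition U := distribution P Vm.
Definition mu := distribution P Phim.

Lemma mVpre (B : set R) : measurable B -> measurable (V @^-1` B).
Proof. by move=> mB; rewrite -[X in measurable X]setTI; apply: mV. Qed.

Hypothesis indep : indep_of P V X A Y0 Y1.

Lemma CI : setI_closed C.
Proof.
move=> _ _ [Bx [Ba [B0 [B1 [mBx mBa mB0 mB1 ->]]]]] [Bx' [Ba' [B0' [B1' [mBx' mBa' mB0' mB1' ->]]]]].
exists (Bx `&` Bx'), (Ba `&` Ba'), (B0 `&` B0'), (B1 `&` B1'); split; try exact: measurableI.
apply/funext => w; apply/propext; rewrite /preimage /setI /=; tauto.
Qed.

Lemma CT : C setT.
Proof.
exists setT, setT, setT, setT; split => //.
by rewrite !preimage_setT !setIT.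
Qed.

Lemma indepG (B : set R) (mB : measurable B) (G : set T') : measurable G ->
  P (G `&` V @^-1` B) = (P G * P (V @^-1` B))%E.
Proof.
move=> mG.
pose m1 : {measure set T' -> \bar R} := pushforward (mrestr P (mVpre mB)) Pm.
have r0 : 0 <= fine (P (V @^-1` B)) by apply: fine_ge0; apply: measure_ge0.
pose m2 := mscale (NngNum r0) P'.
have fVB : P (V @^-1` B) \is a fin_num by rewrite fin_num_measure //; apply: mVpre.
have key : forall G', C G' -> P (G' `&` V @^-1` B) = ((fine (P (V @^-1` B)))%:E * P G')%E.
  move=> _ [Bx [Ba [B0 [B1 [mBx mBa mB0 mB1 ->]]]]].
  by rewrite fineK // [LHS]indep // muleC.
have -> : P (G `&` V @^-1` B) = m1 mid G by [].
have -> : (P G * P (V @^-1` B))%E = m2 G.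
  by rewrite muleC -[P (V @^-1` B)]fineK.
have cov : \bigcup_(k : nat) (fun=> setT : set T') k = setT.
  by apply/funext => w; apply/propext; split => // _; exists 0%N.
apply: (@measure_unique _ _ T' C (fun=> setT) erefl CI (fun=> CT) cov (m1 mid) m2 key _ G mG).
- move=> k; rewrite /m1 /= /pushforward /mrestr /= preimage_setT.
  by rewrite (le_lt_trans (probability_le1 _ _)) ?ltry //; apply: measurableI => //; apply: mVpre.
Qed.

Lemma mu_prod (S : set (T' * R)%type) : measurable S -> (P' \x U)%E S = mu S.
Proof.
apply: product_measure_unique => G B mG mB.
exact: (indepG mB mG).
Qed.

Variables (f : Rvec R d -> R).
Hypotheses (mf : measurable_fun setT f) (f01 : forall x, 0 <= f x <= 1)
  (unif : is_unif01 P V).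

Definition F (h : T -> R) : (T' * R)%type -> \bar R :=
  fun z => (@ind R (z.2 <= f (X z.1)) * h z.1)%:E.

Lemma mfX' : measurable_fun setT (fun w : T' => f (X w)).
Proof. exact: measurableT_comp mf mX'. Qed.

Lemma mF h : measurable_fun setT (h : T' -> R) -> measurable_fun setT (F h).
Proof.
move=> mh; apply/measurable_EFinP; apply: measurable_funM.
  apply: measurable_ind; first exact: measurable_snd.
  exact: measurableT_comp mfX' measurable_fst.
exact: measurableT_comp mh measurable_fst.
Qed.

Lemma mhT h : measurable_fun setT (h : T' -> R) -> measurable_fun setT (h : T -> R).
Proof.
move=> mh _ B mB; have := mid measurableT (mh measurableT B mB).
by rewrite !setTI.
Qed.

Lemma intFPhi h : measurable_fun setT (h : T' -> R) ->
  P.-integrable setT (EFin \o h) -> P.-integrable (Phim @^-1` setT) (F h \o Phim).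
Proof.
move=> mh ih; rewrite preimage_setT.
apply: le_integrable ih => //.
- by apply: measurableT_comp; [exact: mF mh|exact: measurable_funP].
- by move=> w _ /=; rewrite lee_fin ind_le.
Qed.

Lemma intFm h : measurable_fun setT (h : T' -> R) ->
  P.-integrable setT (EFin \o h) -> (P' \x U)%E.-integrable setT (F h).
Proof.
move=> mh ih.
apply/integrableP; split; first exact: mF mh.
rewrite (eq_measure_integral mu); last by move=> S mS _; exact: mu_prod.
rewrite ge0_integral_distribution //; last exact: measurableT_comp (mF mh).
by have /integrableP[_] := intFPhi mh ih; rewrite preimage_setT.
Qed.

Lemma L1 h : measurable_fun setT (h : T' -> R) -> P.-integrable setT (EFin \o h) ->
  (\int[P]_w (@ind R (V w <= f (X w)) * h w)%:E = \int[P' \x U]_z F h z)%E.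
Proof.
move=> mh ih.
have -> : (\int[P' \x U]_z F h z = \int[mu]_z F h z)%E.
  by apply: eq_measure_integral => S mS _; exact: mu_prod.
rewrite /mu integral_distribution //; first exact: mF.
by have := intFPhi mh ih; rewrite preimage_setT.
Qed.

Lemma Uind (c a : R) : 0 <= c <= 1 ->
  (\int[U]_v (@ind R (v <= c) * a)%:E = (c * a)%:E)%E.
Proof.
move=> c01.
have mS : measurable [set v : R | v <= c] by rewrite -set_itvNyc; exact: measurable_itv.
transitivity (\int[U]_v (a%:E * (\1_[set v : R | v <= c] v)%:E))%E.
  apply: eq_integral => v _; rewrite /ind indicE -EFinM; congr EFin.
  case: ifPn => H; first by rewrite mem_set // mul1r mulr1.
  by rewrite memNset ?mul0r ?mulr0 //; apply/negP.
rewrite integralZl //; last exact: integrable_indic.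
rewrite integral_indic // setIT.
transitivity (a%:E * P [set w | (V w <= c)%R])%E; first by [].
by rewrite unif // -EFinM mulrC.
Qed.

Lemma L2 h : measurable_fun setT (h : T' -> R) -> P.-integrable setT (EFin \o h) ->
  (\int[P' \x U]_z F h z = \int[P]_w (f (X w) * h w)%:E)%E.
Proof.
move=> mh ih.
rewrite -integral12_prod_meas1; last exact: intFm.
transitivity (\int[P']_x (f (X x) * h x)%:E)%E.
  by apply: eq_integral => x _; rewrite /fubini_F /F /= Uind.
rewrite /P' integral_distribution //.
  by apply/measurable_EFinP; apply: measurable_funM => //; exact: mfX'.
apply: le_integrable ih => //.
  apply/measurable_EFinP; apply: measurable_funM; [exact: (mhT mfX')|exact: (mhT mh)].
move=> w _ /=; rewrite lee_fin normrM ler_piMl //.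
by have /andP[f0 f1] := f01 (X w); rewrite ger0_norm.
Qed.

Lemma mBv (v : R) : measurable [set x : Rvec R d | v <= f x].
Proof.
have -> : [set x : Rvec R d | v <= f x] = f @^-1` `[v, +oo[ by rewrite set_itvcy.
by rewrite -[X in measurable X]setTI; apply: mf => //; exact: measurable_itv.
Qed.

Lemma L3 h : measurable_fun setT (h : T' -> R) -> P.-integrable setT (EFin \o h) ->
  (\int[P' \x U]_z F h z =
   \int[U]_v (\int[P]_(w in X @^-1` [set x | (v <= f x)%R]) (h w)%:E))%E.
Proof.
move=> mh ih.
rewrite -integral21_prod_meas1; last exact: intFm.
apply: eq_integral => v _; rewrite /fubini_G /F /=.
rewrite /P' integral_distribution //; last first.
  apply: le_integrable ih => //.
    apply/measurable_EFinP; apply: measurable_funM; last exact: (mhT mh).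
    by apply: (mhT (h := fun w : T' => @ind R (v <= f (X w)))); apply: measurable_ind => //; exact: mfX'.
  by move=> w _ /=; rewrite lee_fin ind_le.
  apply/measurable_EFinP; apply: measurable_funM => //.
  by apply: measurable_ind => //; exact: mfX'.
rewrite [RHS]integral_mkcond; apply: eq_integral => w _; rewrite /patch /ind /=.
case: ifPn => H; first by rewrite mem_set // mul1r.
by rewrite memNset ?mul0r //; exact/negP.
Qed.

Hypotheses (A01 : forall w, A w = 0 \/ A w = 1)
  (iY0 : P.-integrable setT (EFin \o Y0)) (iY1 : P.-integrable setT (EFin \o Y1)).
Variable g : Rvec R d -> R.
Hypothesis cond : is_cond_exp P (fun w => Y1 w - Y0 w) X g.

Lemma main :
  Rintegral P setT
    (fun w => YD (Df1 (A w) (V w) (f (X w))) (Y0 w) (Y1 w)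
            - YD (Df0 (A w) (V w) (f (X w))) (Y0 w) (Y1 w))
  / Rintegral P setT
      (fun w => Df1 (A w) (V w) (f (X w)) - Df0 (A w) (V w) (f (X w)))
  = Rintegral P setT
      (fun w => g (X w) * f (X w) / Rintegral P setT (f \o X)).
Proof.
have [mg ig condg] := cond.
pose Z := fun w => Y1 w - Y0 w.
have mZ : measurable_fun setT (Z : T' -> R) := measurable_funB mY1' mY0'.
have iZ : P.-integrable setT (EFin \o Z).
  apply: (@eq_integrable _ _ _ _ _ measurableT ((EFin \o Y1) \- (EFin \o Y0))%E); last exact: integrableB.
  by move=> w _; rewrite /Z /= EFinB.
have mgX : measurable_fun setT ((g \o X) : T' -> R) := measurableT_comp mg mX'.
have one : measurable_fun setT ((fun=> 1) : T' -> R) := measurable_cst _.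
have i1 : P.-integrable setT (EFin \o (fun=> 1 : R)).
  exact: finite_measure_integrable_cst.
have num : (\int[P]_w (YD (Df1 (A w) (V w) (f (X w))) (Y0 w) (Y1 w)
            - YD (Df0 (A w) (V w) (f (X w))) (Y0 w) (Y1 w))%:E
           = \int[P]_w (f (X w) * g (X w))%:E)%E.
  transitivity (\int[P]_w (@ind R (V w <= f (X w)) * Z w)%:E)%E.
    apply: eq_integral => w _; congr EFin; rewrite /YD /Df1 /Df0 /Z.
    by case: (A01 w) => ->; rewrite /ind; case: (leP (V w) (f (X w))) => _; ring.
  rewrite L1 // L3 //.
  transitivity (\int[U]_v (\int[P]_(w in X @^-1` [set x | (v <= f x)%R]) (g (X w))%:E))%E.
    by apply: eq_integral => v _; symmetry; exact: condg (mBv v).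
  by rewrite -(L3 (h := g \o X)) // L2.
have den : (\int[P]_w (Df1 (A w) (V w) (f (X w)) - Df0 (A w) (V w) (f (X w)))%:E
           = \int[P]_w (f (X w))%:E)%E.
  transitivity (\int[P]_w (@ind R (V w <= f (X w)) * (fun=> 1 : R) w)%:E)%E.
    apply: eq_integral => w _; congr EFin; rewrite /Df1 /Df0.
    by case: (A01 w) => ->; rewrite /ind; case: (leP (V w) (f (X w))) => _; ring.
  rewrite L1 // L2 //; apply: eq_integral => w _; by rewrite mulr1.
rewrite [RHS]RintegralZr //; last first.
  apply: le_integrable ig => //.
    apply/measurable_EFinP; apply: measurable_funM; [exact: (mhT mgX)|exact: (mhT mfX')].
  move=> w _ /=; rewrite lee_fin normrM ler_piMr //.
  by have /andP[f0 f1] := f01 (X w); rewrite ger0_norm.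
rewrite /Rintegral num den; congr (fine _ / _).
by apply: eq_integral => w _; rewrite mulrC.
Qed.
End S.

Unset Implicit Arguments.
Theorem proposition1 (R : realType) (dT : measure_display)
  (T : measurableType dT) (P : probability T R) (d : nat)
  (X : T -> Rvec R d) (A Y0 Y1 V : T -> R) (f : Rvec R d -> R)
  (g : Rvec R d -> R) :
  measurable_fun setT X -> measurable_fun setT A ->
  measurable_fun setT Y0 -> measurable_fun setT Y1 ->
  measurable_fun setT V -> measurable_fun setT f ->
  (forall w, A w = 0 \/ A w = 1) ->
  (forall x, 0 <= f x <= 1) ->
  P.-integrable setT (EFin \o Y0) -> P.-integrable setT (EFin \o Y1) ->
  is_unif01 P V ->
  indep_of P V X A Y0 Y1 ->
  0 < Rintegral P setT (f \o X) ->
  is_cond_exp P (fun w => Y1 w - Y0 w) X g ->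
  Rintegral P setT
    (fun w => YD (Df1 (A w) (V w) (f (X w))) (Y0 w) (Y1 w)
            - YD (Df0 (A w) (V w) (f (X w))) (Y0 w) (Y1 w))
  / Rintegral P setT
      (fun w => Df1 (A w) (V w) (f (X w)) - Df0 (A w) (V w) (f (X w)))
  = Rintegral P setT
      (fun w => g (X w) * f (X w) / Rintegral P setT (f \o X)).
Proof.
move=> mX mA mY0 mY1 mV mf A01 f01 iY0 iY1 unif indep cpos cond.
by apply: main.
Qed.
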